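(* Let $\mathcal K$ be a 2-category, let $(V,\psi),(W,\phi),(U,\theta)$ be 1-cells $t\to t'$ and $(V',\psi'),(W',\phi')$ be 1-cells $t'\to t''$ in $\mathrm{EM}^w(\mathcal K)$, where $(t,\mu,\eta)$, $(t',\mu',\eta')$, $(t'',\mu'',\eta'')$ are monads. (1) If $\omega:V\Rightarrow W$ is $\iota$-admissible from $(V,\psi)$ to $(W,\phi)$ and $\omega':V'\Rightarrow W'$ is $\iota$-admissible from $(V',\psi')$ to $(W',\phi')$, then $(\omega't'\ast\psi'\ast\eta''V')\circ(\omega t\ast\psi\ast\eta'V)=\omega'\omega t\ast V'\psi\ast\psi'V\ast\eta''V'V$; in particular $\omega'\omega:V'V\Rightarrow W'W$ is $\iota$-admissible from $(V'V,V'\psi\ast\psi'V)$ to $(W'W,W'\phi\ast\phi'W)$. (2) If $\omega$ and $\omega'$ as in (1) are instead $\pi$-admissible, then $(\phi'\ast\eta''W'\ast\omega')\circ(\phi\ast\eta'W\ast\omega)=W'\phi\ast\phi'W\ast\eta''W'W\ast\omega'\omega$; in particular $\omega'\omega$ is $\pi$-admissible from $(V'V,V'\psi\ast\psi'V)$ to $(W'W,W'\phi\ast\phi'W)$. (3) If $\omega:V\Rightarrow W$ is $\iota$-admissible from $(V,\psi)$ to $(W,\phi)$ and $\kappa:W\Rightarrow U$ is $\iota$-admissible from $(W,\phi)$ to $(U,\theta)$, then $(\kappa t\ast\phi\ast\eta'W)\bullet(\omega t\ast\psi\ast\eta'V)=\kappa t\ast\omega t\ast\psi\ast\eta'V$;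 in particular $\kappa\ast\omega$ is $\iota$-admissible from $(V,\psi)$ to $(U,\theta)$. (4) If $\omega$ and $\kappa$ as in (3) are instead $\pi$-admissible, then $(\theta\ast\eta'U\ast\kappa)\bullet(\phi\ast\eta'W\ast\omega)=\theta\ast\eta'U\ast\kappa\ast\omega$; in particular $\kappa\ast\omega$ is $\pi$-admissible from $(V,\psi)$ to $(U,\theta)$.
   Context: Conventions in a 2-category $\mathcal K$: horizontal composition and whiskering by juxtaposition in the order of functor composition; identity 1-cell of $k$ written $k$, identity 2-cell of $V$ written $V$; vertical composition $\ast$ with $\alpha\ast\beta$ meaning $\beta$ then $\alpha$. A monad $(t,\mu,\eta)$ on $k$: $t:k\to k$, $\mu:tt\Rightarrow t$, $\eta:k\Rightarrow t$, associative and unital. The 2-category $\mathrm{EM}^w(\mathcal K)$: 0-cells are monads; a 1-cell $(t,\mu,\eta)\to(t',\mu',\eta')$ is $(V,\psi)$, $V:k\to k'$, $\psi:t'V\Rightarrow Vt$, with $V\mu\ast\psi t\ast t'\psi=\psi\ast\mu'V$; a 2-cell $(V,\psi)\Rightarrow(W,\phi)$ is $\varrho:V\Rightarrow Wt$ with $W\mu\ast\varrho t\ast\psi=W\mu\ast\phi t\ast t'\varrho$ and $\varrho=W\mu\ast\phi t\ast\eta'Wt\ast\varrho$. Horizontal composite of 1-cells $(V,\psi):t\to t'$, $(V',\psi'):t'\to t''$ is $(V'V,V'\psi\ast\psi'V)$; of 2-cells $\varrho:(V,\psi)\Rightarrow(W,\phi)$, $\varrho':(V',\psi')\Rightarrow(W',\phi')$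 is $\varrho'\circ\varrho=W'W\mu\ast W'\varrho t\ast W'\psi\ast\varrho'V$; vertical composite of $\varrho:(V,\psi)\Rightarrow(W,\phi)$, $\tau:(W,\phi)\Rightarrow(U,\theta)$ is $\tau\bullet\varrho=U\mu\ast\tau t\ast\varrho$. For 1-cells $(V,\psi),(W,\phi):t\to t'$ in $\mathrm{EM}^w(\mathcal K)$, a 2-cell $\omega:V\Rightarrow W$ of $\mathcal K$ is called $\iota$-admissible (from $(V,\psi)$ to $(W,\phi)$) if $\omega t\ast\psi=W\mu\ast\phi t\ast t'\omega t\ast t'\psi\ast t'\eta'V$ (equivalently, $\omega t\ast\psi\ast\eta'V$ is a 2-cell $(V,\psi)\Rightarrow(W,\phi)$ in $\mathrm{EM}^w(\mathcal K)$), and $\pi$-admissible if $\phi\ast t'\omega=W\mu\ast\phi t\ast\eta'Wt\ast\omega t\ast\psi$ (equivalently, $\phi\ast\eta'W\ast\omega$ is a 2-cell $(V,\psi)\Rightarrow(W,\phi)$ in $\mathrm{EM}^w(\mathcal K)$). *)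

(* Defs.v *)
(* Plain Rocq: a strict 2-category (Cat-enriched category) presented with
   total composition operations on 2-cells, each 2-cell carrying its source
   and target 1-cell; the axioms are stated under the usual composability
   conditions.  Composites of non-composable 2-cells are unconstrained junk
   and never occur in the statement. *)

Set Implicit Arguments.
Unset Strict Implicit.

Record TwoCat := {
  ob : Type;
  hom : ob -> ob -> Type;
  cell : ob -> ob -> Type;
  id1 : forall a, hom a a;
  comp1 : forall a b c, hom b c -> hom a b -> hom a c;
  src : forall a b, cell a b -> hom a b;
  tgt : forall a b, cell a b -> hom a b;
  id2 : forall a b, hom a b -> cell a b;
  vcomp : forall a b, cell a b -> cell a b -> cell a b;  (* vcomp al be = al * be : be then al *)
  hcomp : forall a b c, cell b c -> cell a b -> cell a c;
  comp1A : forall a b c d (h : hom c d) (g : hom b c) (f : hom a b),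
      comp1 h (comp1 g f) = comp1 (comp1 h g) f;
  comp1_id1l : forall a b (f : hom a b), comp1 (id1 b) f = f;
  comp1_id1r : forall a b (f : hom a b), comp1 f (id1 a) = f;
  src_id2 : forall a b (f : hom a b), src (id2 f) = f;
  tgt_id2 : forall a b (f : hom a b), tgt (id2 f) = f;
  src_vcomp : forall a b (al be : cell a b), tgt be = src al ->
      src (vcomp al be) = src be;
  tgt_vcomp : forall a b (al be : cell a b), tgt be = src al ->
      tgt (vcomp al be) = tgt al;
  vcompA : forall a b (al be ga : cell a b), tgt ga = src be -> tgt be = src al ->
      vcomp al (vcomp be ga) = vcomp (vcomp al be) ga;
  vcomp_id2l : forall a b (al : cell a b), vcomp (id2 (tgt al)) al = al;
  vcomp_id2r : forall a b (al : cell a b), vcomp al (id2 (src al)) = al;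
  src_hcomp : forall a b c (al : cell b c) (be : cell a b),
      src (hcomp al be) = comp1 (src al) (src be);
  tgt_hcomp : forall a b c (al : cell b c) (be : cell a b),
      tgt (hcomp al be) = comp1 (tgt al) (tgt be);
  hcomp_id2 : forall a b c (g : hom b c) (f : hom a b),
      hcomp (id2 g) (id2 f) = id2 (comp1 g f);
  interchange : forall a b c (al be : cell b c) (al' be' : cell a b),
      tgt be = src al -> tgt be' = src al' ->
      hcomp (vcomp al be) (vcomp al' be') = vcomp (hcomp al al') (hcomp be be');
  hcompA : forall a b c d (al : cell c d) (be : cell b c) (ga : cell a b),
      hcomp al (hcomp be ga) = hcomp (hcomp al be) ga;
  hcomp_id1l : forall a b (al : cell a b), hcomp (id2 (id1 b)) al = al;
  hcomp_id1r : forall a b (al : cell a b), hcomp al (id2 (id1 a)) = al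
}.

Arguments hom : clear implicits.
Arguments cell : clear implicits.
Arguments id1 {_} a.
Arguments comp1 {_ a b c} g f.
Arguments src {_ a b} al.
Arguments tgt {_ a b} al.
Arguments id2 {_ a b} f.
Arguments vcomp {_ a b} al be.
Arguments hcomp {_ a b c} al be.

(* whiskering: wl V al = "V al",  wr al V = "al V" *)
Definition wl (K : TwoCat) (a b c : ob K) (V : hom K b c) (al : cell K a b) : cell K a c :=
  hcomp (id2 V) al.
Definition wr (K : TwoCat) (a b c : ob K) (al : cell K b c) (V : hom K a b) : cell K a c :=
  hcomp al (id2 V).
Arguments wl {K a b c} V al.
Arguments wr {K a b c} al V.

Notation "al ** be" := (vcomp al be) (at level 45, right associativity).

Record monad (K : TwoCat) := {
  mk : ob K;
  mt : hom K mk mk;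
  mmu : cell K mk mk;
  meta : cell K mk mk;
  src_mmu : src mmu = comp1 mt mt;
  tgt_mmu : tgt mmu = mt;
  src_meta : src meta = id1 mk;
  tgt_meta : tgt meta = mt;
  mmu_assoc : mmu ** wl mt mmu = mmu ** wr mmu mt;
  mmu_unitl : mmu ** wr meta mt = id2 mt;
  mmu_unitr : mmu ** wl mt meta = id2 mt
}.
Arguments mk {K} m.
Arguments mt {K} m.
Arguments mmu {K} m.
Arguments meta {K} m.

Section EM.
Variable K : TwoCat.

Definition em1 (t t' : monad K) (V : hom K (mk t) (mk t')) (psi : cell K (mk t) (mk t')) : Prop :=
  src psi = comp1 (mt t') V /\ tgt psi = comp1 V (mt t) /\
  wl V (mmu t) ** wr psi (mt t) ** wl (mt t') psi = psi ** wr (mmu t') V.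

Definition em2 (t t' : monad K) (V : hom K (mk t) (mk t')) (psi : cell K (mk t) (mk t'))
  (W : hom K (mk t) (mk t')) (phi : cell K (mk t) (mk t')) (rho : cell K (mk t) (mk t')) : Prop :=
  src rho = V /\ tgt rho = comp1 W (mt t) /\
  wl W (mmu t) ** wr rho (mt t) ** psi = wl W (mmu t) ** wr phi (mt t) ** wl (mt t') rho /\
  rho = wl W (mmu t) ** wr phi (mt t) ** wr (meta t') (comp1 W (mt t)) ** rho.

(* horizontal composite rho' o rho of rho : (V,psi) => (W,phi) (t -> t')
   and rho' : (V',psi') => (W',phi') (t' -> t'') *)
Definition emh (t : monad K) (k' k'' : ob K) (V W : hom K (mk t) k') (psi : cell K (mk t) k')
  (W' : hom K k' k'') (rho' : cell K k' k'') (rho : cell K (mk t) k') : cell K (mk t) k'' :=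
  wl (comp1 W' W) (mmu t) ** wl W' (wr rho (mt t)) ** wl W' psi ** wr rho' V.

(* vertical composite tau . rho, with tau : (W,phi) => (U,theta) *)
Definition emv (t : monad K) (k' : ob K) (U : hom K (mk t) k')
  (tau rho : cell K (mk t) k') : cell K (mk t) k' :=
  wl U (mmu t) ** wr tau (mt t) ** rho.

Definition iadm (t t' : monad K) (V : hom K (mk t) (mk t')) (psi : cell K (mk t) (mk t'))
  (W : hom K (mk t) (mk t')) (phi : cell K (mk t) (mk t')) (om : cell K (mk t) (mk t')) : Prop :=
  src om = V /\ tgt om = W /\
  wr om (mt t) ** psi =
  wl W (mmu t) ** wr phi (mt t) ** wl (mt t') (wr om (mt t)) ** wl (mt t') psi
    ** wl (mt t') (wr (meta t') V).

Definition padm (t t' : monad K) (V : hom K (mk t) (mk t')) (psi : cell K (mk t) (mk t'))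
  (W : hom K (mk t) (mk t')) (phi : cell K (mk t) (mk t')) (om : cell K (mk t) (mk t')) : Prop :=
  src om = V /\ tgt om = W /\
  phi ** wl (mt t') om =
  wl W (mmu t) ** wr phi (mt t) ** wr (meta t') (comp1 W (mt t)) ** wr om (mt t) ** psi.

End EM.
Arguments em1 {K} t t' V psi.
Arguments em2 {K} t t' V psi W phi rho.
Arguments emh {K} t {k' k''} V W psi W' rho' rho.
Arguments emv {K} t {k'} U tau rho.
Arguments iadm {K} t t' V psi W phi om.
Arguments padm {K} t t' V psi W phi om.

(* Main.v *)
Require Import Defs.
Set Implicit Arguments.
From Stdlib Require Import Setoid.

Section Basic.
Context {K : TwoCat}.

Lemma src_wl a b c (X : hom K b c) (x : cell K a b) : src (wl X x) = comp1 X (src x).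
Proof. unfold wl; rewrite src_hcomp, src_id2; reflexivity. Qed.
Lemma tgt_wl a b c (X : hom K b c) (x : cell K a b) : tgt (wl X x) = comp1 X (tgt x).
Proof. unfold wl; rewrite tgt_hcomp, tgt_id2; reflexivity. Qed.
Lemma src_wr a b c (x : cell K b c) (X : hom K a b) : src (wr x X) = comp1 (src x) X.
Proof. unfold wr; rewrite src_hcomp, src_id2; reflexivity. Qed.
Lemma tgt_wr a b c (x : cell K b c) (X : hom K a b) : tgt (wr x X) = comp1 (tgt x) X.
Proof. unfold wr; rewrite tgt_hcomp, tgt_id2; reflexivity. Qed.

Lemma wl_wl a b c d (X : hom K c d) (Y : hom K b c) (x : cell K a b) :
  wl X (wl Y x) = wl (comp1 X Y) x.
Proof. unfold wl; rewrite hcompA, hcomp_id2; reflexivity. Qed.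
Lemma wr_wr a b c d (x : cell K c d) (X : hom K b c) (Y : hom K a b) :
  wr (wr x X) Y = wr x (comp1 X Y).
Proof. unfold wr; rewrite <- hcompA, hcomp_id2; reflexivity. Qed.
Lemma wl_wr a b c d (X : hom K c d) (x : cell K b c) (Y : hom K a b) :
  wl X (wr x Y) = wr (wl X x) Y.
Proof. unfold wl, wr; rewrite hcompA; reflexivity. Qed.
Lemma wl_id2 a b c (X : hom K b c) (f : hom K a b) : wl X (id2 f) = id2 (comp1 X f).
Proof. unfold wl; rewrite hcomp_id2; reflexivity. Qed.
Lemma wr_id2 a b c (f : hom K b c) (X : hom K a b) : wr (id2 f) X = id2 (comp1 f X).
Proof. unfold wr; rewrite hcomp_id2; reflexivity. Qed.
Lemma wl_id1 a b (x : cell K a b) : wl (id1 b) x = x.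
Proof. unfold wl; apply hcomp_id1l. Qed.
Lemma wr_id1 a b (x : cell K a b) : wr x (id1 a) = x.
Proof. unfold wr; apply hcomp_id1r. Qed.

Lemma idid a b (f : hom K a b) : id2 f ** id2 f = id2 f.
Proof. pose proof (vcomp_id2l (id2 f)) as H. rewrite tgt_id2 in H. exact H. Qed.

Lemma wl_v a b c (X : hom K b c) (x y : cell K a b) : tgt y = src x ->
  wl X (x ** y) = wl X x ** wl X y.
Proof.
  intro H. unfold wl. rewrite <- (idid _ _ X) at 1.
  rewrite interchange; [reflexivity | rewrite tgt_id2, src_id2; reflexivity | exact H].
Qed.
Lemma wr_v a b c (x y : cell K b c) (X : hom K a b) : tgt y = src x ->
  wr (x ** y) X = wr x X ** wr y X.
Proof.
  intro H. unfold wr. rewrite <- (idid _ _ X) at 1.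
  rewrite interchange; [reflexivity | exact H | rewrite tgt_id2, src_id2; reflexivity].
Qed.

Lemma hcL a b c (x : cell K b c) (y : cell K a b) :
  hcomp x y = wl (tgt x) y ** wr x (src y).
Proof.
  unfold wl, wr.
  rewrite <- (vcomp_id2l x) at 1. rewrite <- (vcomp_id2r y) at 1.
  rewrite interchange; [reflexivity | rewrite src_id2; reflexivity | rewrite tgt_id2; reflexivity].
Qed.
Lemma hcR a b c (x : cell K b c) (y : cell K a b) :
  hcomp x y = wr x (tgt y) ** wl (src x) y.
Proof.
  unfold wl, wr.
  rewrite <- (vcomp_id2r x) at 1. rewrite <- (vcomp_id2l y) at 1.
  rewrite interchange; [reflexivity | rewrite tgt_id2; reflexivity | rewrite src_id2; reflexivity].
Qed.
Lemma xch a b c (x : cell K b c) (y : cell K a b) :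
  wl (tgt x) y ** wr x (src y) = wr x (tgt y) ** wl (src x) y.
Proof. rewrite <- hcL, <- hcR; reflexivity. Qed.

Lemma lid a b (f : hom K a b) (x : cell K a b) : tgt x = f -> id2 f ** x = x.
Proof. intros <-; apply vcomp_id2l. Qed.
Lemma rid a b (f : hom K a b) (x : cell K a b) : src x = f -> x ** id2 f = x.
Proof. intros <-; apply vcomp_id2r. Qed.
End Basic.
Arguments xch {K a b c} x y.
Arguments hcL {K a b c} x y.
Arguments hcR {K a b c} x y.

Ltac c1step := first [ rewrite <- comp1A | rewrite comp1_id1l | rewrite comp1_id1r ].

Ltac ty_step := first [
   rewrite src_wl | rewrite tgt_wl | rewrite src_wr | rewrite tgt_wr
 | rewrite src_hcomp | rewrite tgt_hcomp | rewrite src_id2 | rewrite tgt_id2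
 | rewrite src_mmu | rewrite tgt_mmu | rewrite src_meta | rewrite tgt_meta
 | match goal with H : src ?x = _ |- context [src ?x] => rewrite H
                 | H : tgt ?x = _ |- context [tgt ?x] => rewrite H end
 | rewrite src_vcomp by tyc | rewrite tgt_vcomp by tyc
 | c1step ]
with tyc := repeat ty_step; reflexivity.

Ltac norm_step := first [
   rewrite wl_wl | rewrite wr_wr | rewrite wl_wr | rewrite wl_id2 | rewrite wr_id2
 | rewrite wl_id1 | rewrite wr_id1 | c1step
 | rewrite wl_v by tyc | rewrite wr_v by tyc
 | rewrite <- vcompA by tyc
 | rewrite lid by tyc | rewrite rid by tyc ].

Ltac simp := repeat (first [ty_step | norm_step]).

Ltac app L Y := lazymatch L with vcomp ?a ?b => let r := app b Y in constr:(vcomp a r) | _ => constr:(vcomp L Y) end.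
Ltac len L := lazymatch L with vcomp _ ?b => let n := len b in constr:(S n) | _ => constr:(O) end.
Ltac drop n c := lazymatch n with O => c | S ?m => lazymatch c with vcomp _ ?b => drop m b end end.
Ltac hd L := lazymatch L with vcomp ?a _ => a | _ => L end.
Ltac rassoc := repeat (rewrite <- vcompA by tyc); reflexivity.

Ltac rseg E :=
  lazymatch type of E with ?L = ?R =>
   let h := hd L in let n := len L in
   first [
    match goal with |- context [vcomp h ?rest] =>
      let Y := drop n rest in
      let l := app L Y in let r := app R Y in
      let HE := fresh in
      assert (HE : l = r) by (transitivity (vcomp L Y); [ rassoc | rewrite E; rassoc ]);
      rewrite HE; clear HE
    end
   | rewrite E ]
  end.

Ltac rw t := let E := fresh "E" in pose proof t as E; cbv beta in E; revert E; simp; intro E; rseg E; clear E; simp.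
Ltac rwb t := rw (eq_sym t).

Lemma lemB K (t t' : monad K) V psi W om :
  src psi = comp1 (mt t') V -> tgt psi = comp1 V (mt t) ->
  wl V (mmu t) ** wr psi (mt t) ** wl (mt t') psi = psi ** wr (mmu t') V ->
  src om = V -> tgt om = W ->
  wl W (mmu t) ** wr (wr om (mt t) ** psi ** wr (meta t') V) (mt t) ** psi = wr om (mt t) ** psi.
Proof.
  intros Hs Ht Hax Hos Hot. simp.
  rwb (xch (meta t') psi).
  rw (xch om (mmu t)).
  rw Hax.
  rw (f_equal (fun c => wr c V) (mmu_unitl t')).
  reflexivity.
Qed.

Lemma lemA K (t t' : monad K) V psi W phi om :
  src psi = comp1 (mt t') V -> tgt psi = comp1 V (mt t) ->
  src phi = comp1 (mt t') W -> tgt phi = comp1 W (mt t) ->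
  src om = V -> tgt om = W ->
  wr om (mt t) ** psi =
  wl W (mmu t) ** wr phi (mt t) ** wl (mt t') (wr om (mt t)) ** wl (mt t') psi
    ** wl (mt t') (wr (meta t') V) ->
  wl W (mmu t) ** wr phi (mt t) ** wr (meta t') (comp1 W (mt t)) ** wr om (mt t) ** psi ** wr (meta t') V
  = wr om (mt t) ** psi ** wr (meta t') V.
Proof.
  intros Hs Ht Hs' Ht' Hos Hot Hi. simp.
  rwb (xch (meta t') (wr om (mt t))).
  rwb (xch (meta t') psi).
  rwb (xch (meta t') (wr (meta t') V)).
  rwb Hi.
  reflexivity.
Qed.

Lemma lemC K (t t' : monad K) V psi W phi om :
  src psi = comp1 (mt t') V -> tgt psi = comp1 V (mt t) ->
  wl V (mmu t) ** wr psi (mt t) ** wl (mt t') psi = psi ** wr (mmu t') V ->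
  src phi = comp1 (mt t') W -> tgt phi = comp1 W (mt t) ->
  src om = V -> tgt om = W ->
  wr om (mt t) ** psi =
  wl W (mmu t) ** wr phi (mt t) ** wl (mt t') (wr om (mt t)) ** wl (mt t') psi
    ** wl (mt t') (wr (meta t') V) ->
  wr om (mt t) ** psi ** wr (mmu t') V
  = wl W (mmu t) ** wr phi (mt t) ** wl (mt t') (wr om (mt t)) ** wl (mt t') psi.
Proof.
  intros Hs Ht Hax Hs' Ht' Hos Hot Hi. simp.
  rwb Hax.
  rwb (xch om (mmu t)).
  rw (f_equal (fun c => wr c (mt t)) Hi).
  rwb (f_equal (wl W) (mmu_assoc t)).
  rw (xch phi (mmu t)).
  rw (f_equal (wl (mt t')) (@lemB K t t' V psi W om Hs Ht Hax Hos Hot)).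
  reflexivity.
Qed.

Lemma lemC' K (t t' : monad K) V psi W phi om :
  src psi = comp1 (mt t') V -> tgt psi = comp1 V (mt t) ->
  src phi = comp1 (mt t') W -> tgt phi = comp1 W (mt t) ->
  wl W (mmu t) ** wr phi (mt t) ** wl (mt t') phi = phi ** wr (mmu t') W ->
  src om = V -> tgt om = W ->
  phi ** wl (mt t') om =
  wl W (mmu t) ** wr phi (mt t) ** wr (meta t') (comp1 W (mt t)) ** wr om (mt t) ** psi ->
  wl W (mmu t) ** wr phi (mt t) ** wl (mt t') (wr om (mt t)) ** wl (mt t') psi
  = phi ** wl (mt t') om ** wr (mmu t') V.
Proof.
  intros Hs Ht Hs' Ht' Hax' Hos Hot Hp. simp.
  rw (xch (mmu t') om).
  rwb Hax'.
  rw (f_equal (wl (mt t')) Hp).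
  rwb (xch phi (mmu t)).
  rw (f_equal (wl W) (mmu_assoc t)).
  rw (f_equal (fun c => wr c (mt t)) Hax').
  rw (f_equal (fun c => wr c (comp1 W (mt t))) (mmu_unitr t')).
  reflexivity.
Qed.
Theorem lemma1p3 (K : TwoCat) (t t' t'' : monad K)
  (V W U : hom K (mk t) (mk t')) (psi phi theta : cell K (mk t) (mk t'))
  (V' W' : hom K (mk t') (mk t'')) (psi' phi' : cell K (mk t') (mk t''))
  (om kap : cell K (mk t) (mk t')) (om' : cell K (mk t') (mk t'')) :
  em1 t t' V psi -> em1 t t' W phi -> em1 t t' U theta ->
  em1 t' t'' V' psi' -> em1 t' t'' W' phi' ->
  (* (1) *)
  (iadm t t' V psi W phi om -> iadm t' t'' V' psi' W' phi' om' ->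
     emh t V W psi W'
       (wr om' (mt t') ** psi' ** wr (meta t'') V')
       (wr om (mt t) ** psi ** wr (meta t') V)
     = wr (hcomp om' om) (mt t) ** wl V' psi ** wr psi' V ** wr (meta t'') (comp1 V' V)
   /\ iadm t t'' (comp1 V' V) (wl V' psi ** wr psi' V)
                 (comp1 W' W) (wl W' phi ** wr phi' W) (hcomp om' om)) /\
  (* (2) *)
  (padm t t' V psi W phi om -> padm t' t'' V' psi' W' phi' om' ->
     emh t V W psi W'
       (phi' ** wr (meta t'') W' ** om')
       (phi ** wr (meta t') W ** om)
     = wl W' phi ** wr phi' W ** wr (meta t'') (comp1 W' W) ** hcomp om' om
   /\ padm t t'' (comp1 V' V) (wl V' psi ** wr psi' V)
                 (comp1 W' W) (wl W' phi ** wr phi' W) (hcomp om' om)) /\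
  (* (3) *)
  (iadm t t' V psi W phi om -> iadm t t' W phi U theta kap ->
     emv t U (wr kap (mt t) ** phi ** wr (meta t') W)
             (wr om (mt t) ** psi ** wr (meta t') V)
     = wr kap (mt t) ** wr om (mt t) ** psi ** wr (meta t') V
   /\ iadm t t' V psi U theta (kap ** om)) /\
  (* (4) *)
  (padm t t' V psi W phi om -> padm t t' W phi U theta kap ->
     emv t U (theta ** wr (meta t') U ** kap)
             (phi ** wr (meta t') W ** om)
     = theta ** wr (meta t') U ** kap ** om
   /\ padm t t' V psi U theta (kap ** om)).
Proof.
  intros [HsV [HtV HaxV]] [HsW [HtW HaxW]] [HsU [HtU HaxU]] [HsV' [HtV' HaxV']] [HsW' [HtW' HaxW']].
  split; [|split; [|split]].
  - intros [Hos [Hot Hi]] [Hos' [Hot' Hi']]. split.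
    + unfold emh. rewrite (hcR om' om). simp.
      rw (f_equal (wl W') (@lemB K t t' V psi W om HsV HtV HaxV Hos Hot)).
      rw (xch om' psi).
      rw (xch om' (wr om (mt t))).
      reflexivity.
    + unfold iadm. split; [tyc | split; [tyc | ]].
      rewrite (hcL om' om). simp.
      rwb (xch om' psi).
      rw (f_equal (fun c => wr c V) Hi').
      rw (f_equal (wl W') (@lemC K t t' V psi W phi om HsV HtV HaxV HsW HtW Hos Hot Hi)).
      rwb (xch phi' (wr om (mt t))).
      rwb (xch (wl (mt t'') om') psi).
      rwb (xch phi' psi).
      reflexivity.
  - intros [Hos [Hot Hp]] [Hos' [Hot' Hp']]. split.
    + unfold emh. rewrite (hcL om' om). simp.
      rwb (f_equal (wl W') Hp).
      rw (xch phi' om).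
      rw (xch (meta t'') (wl W' om)).
      reflexivity.
    + unfold padm. split; [tyc | split; [tyc | ]].
      rewrite (hcR om' om). simp.
      rwb (xch om' (wr om (mt t))).
      rwb (xch om' psi).
      rwb (xch (meta t'') (wr (wl W' om) (mt t))).
      rwb (xch (meta t'') (wl W' psi)).
      rwb (xch phi' (wr om (mt t))).
      rwb (xch phi' psi).
      rw (f_equal (wl W') (@lemC' K t t' V psi W phi om HsV HtV HsW HtW HaxW Hos Hot Hp)).
      rwb (f_equal (fun c => wr c V) Hp').
      rw (xch phi' om).
      rw (xch (wl (mt t'') om') om).
      reflexivity.
  - intros [Hos [Hot Hi]] [Hks [Hkt Hk]]. split.
    + unfold emv. simp.
      rw (xch kap (mmu t)).
      rw (@lemA K t t' V psi W phi om HsV HtV HsW HtW Hos Hot Hi).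
      reflexivity.
    + unfold iadm. split; [tyc | split; [tyc | ]]. simp.
      rw Hi.
      rwb (xch kap (mmu t)).
      rw (f_equal (fun c => wr c (mt t)) Hk).
      rwb (f_equal (wl U) (mmu_assoc t)).
      rw (xch theta (mmu t)).
      rw (xch (wl (mt t') kap) (mmu t)).
      rw (f_equal (wl (mt t')) (@lemA K t t' V psi W phi om HsV HtV HsW HtW Hos Hot Hi)).
      reflexivity.
  - intros [Hos [Hot Hp]] [Hks [Hkt Hk]]. split.
    + unfold emv. simp.
      rwb Hk.
      rw (xch (meta t') kap).
      reflexivity.
    + unfold padm. split; [tyc | split; [tyc | ]]. simp.
      rw Hk.
      rw Hp.
      rwb (xch kap (mmu t)).
      rwb (xch (meta t') (wl U (mmu t))).
      rwb (xch theta (mmu t)).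
      rw (f_equal (wl U) (mmu_assoc t)).
      rwb (f_equal (fun c => wr c (mt t)) Hk).
      rw (xch (meta t') (wr kap (mt t))).
      reflexivity.
Qed.
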